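(* Let $\mathfrak A$ be a properly infinite von Neumann algebra acting on a Hilbert space $\mathcal H$. Then $\mathfrak A$ is neither $*$-clean nor strongly clean.
   Context: A $*$-ring is $*$-clean if every element is the sum of an invertible element and a projection ($P=P^*=P^2$). A unital ring is strongly clean if every element $T$ can be written as $U+P$ with $U$ invertible, $P$ idempotent and $PT=TP$. *)

(* Defs.v *)
From HB Require Import structures.
From mathcomp Require Import all_boot all_order all_algebra.
From mathcomp Require Import complex.
From mathcomp Require Import reals.
Set Implicit Arguments. Unset Strict Implicit. Unset Printing Implicit Defensive.
Import Order.TTheory GRing.Theory Num.Theory.
Local Open Scope ring_scope.

Section Hilbert.
Variables (R : realType) (H : lmodType R[i]) (ip : H -> H -> R[i]).

Definition hnorm (x : H) : R := Num.sqrt (complex.Re (ip x x)).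

Definition is_hilbert : Prop :=
  [/\ (forall (a : R[i]) x y z, ip (a *: x + y) z = a * ip x z + ip y z),
      (forall x y, ip y x = (ip x y)^*),
      (forall x, 0 <= ip x x),
      (forall x, ip x x = 0 -> x = 0) &
      (forall u : nat -> H,
         (forall e : R, 0 < e -> exists N, forall m n, (N <= m)%N -> (N <= n)%N ->
             hnorm (u m - u n) < e) ->
         exists l : H, forall e : R, 0 < e -> exists N, forall n, (N <= n)%N ->
             hnorm (u n - l) < e)].

Definition bounded_op (T : H -> H) : Prop :=
  (forall (a : R[i]) x y, T (a *: x + y) = a *: T x + T y) /\
  exists M : R, forall x, hnorm (T x) <= M * hnorm x.

Definition is_adjoint (T S : H -> H) : Prop := forall x y, ip (T x) y = ip x (S y).

Definition op_eq (T S : H -> H) : Prop := forall x, T x = S x.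
Definition commute_op (T S : H -> H) : Prop := op_eq (T \o S) (S \o T).

Definition commutant (A : (H -> H) -> Prop) (S : H -> H) : Prop :=
  bounded_op S /\ forall T, A T -> commute_op S T.

Definition von_neumann_algebra (A : (H -> H) -> Prop) : Prop :=
  [/\ forall T, A T -> bounded_op T,
      forall T, A T -> exists S, A S /\ is_adjoint T S &
      forall T, A T <-> commutant (commutant A) T].

Definition is_projection (P : H -> H) : Prop := op_eq (P \o P) P /\ is_adjoint P P.

Definition mvn_equiv (A : (H -> H) -> Prop) (P Q : H -> H) : Prop :=
  exists V Vs, [/\ A V, A Vs, is_adjoint V Vs, op_eq (Vs \o V) P & op_eq (V \o Vs) Q].

Definition proj_le (Q P : H -> H) : Prop := op_eq (Q \o P) Q.
Definition proj_lt (Q P : H -> H) : Prop := proj_le Q P /\ ~ op_eq Q P.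

Definition infinite_proj (A : (H -> H) -> Prop) (P : H -> H) : Prop :=
  A P /\ is_projection P /\
  exists Q, [/\ A Q, is_projection Q, proj_lt Q P & mvn_equiv A P Q].

Definition central_proj (A : (H -> H) -> Prop) (P : H -> H) : Prop :=
  A P /\ is_projection P /\ forall T, A T -> commute_op P T.

(* properly infinite (Kadison-Ringrose 6.3.1): I is infinite and every
   central projection is 0 or infinite *)
Definition properly_infinite (A : (H -> H) -> Prop) : Prop :=
  infinite_proj A id /\
  forall Q, central_proj A Q -> op_eq Q (fun _ => 0) \/ infinite_proj A Q.

Definition invertible_in (A : (H -> H) -> Prop) (U : H -> H) : Prop :=
  exists V, [/\ A V, op_eq (U \o V) id & op_eq (V \o U) id].

Definition star_clean (A : (H -> H) -> Prop) : Prop :=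
  forall T, A T -> exists U P, [/\ A U, A P, invertible_in A U, is_projection P &
                                  op_eq T (fun x => U x + P x)].

Definition strongly_clean (A : (H -> H) -> Prop) : Prop :=
  forall T, A T -> exists U P, [/\ A U, A P, invertible_in A U,
                                  op_eq (P \o P) P /\ commute_op P T &
                                  op_eq T (fun x => U x + P x)].
End Hilbert.

(* Main.v *)
Require Import Defs.
From HB Require Import structures.
From mathcomp Require Import all_boot all_order all_algebra.
From mathcomp Require Import complex.
From mathcomp Require Import reals.
From mathcomp Require Import ring lra.
Set Implicit Arguments. Unset Strict Implicit. Unset Printing Implicit Defensive.
Import Order.TTheory GRing.Theory Num.Theory.
Local Open Scope ring_scope.
Section Basic.
Variables (R : realType) (H : lmodType R[i]) (ip : H -> H -> R[i]).
Hypothesis hh : is_hilbert ip.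

Lemma ip_lin a x y z : ip (a *: x + y) z = a * ip x z + ip y z.
Proof. by case: hh => h _ _ _ _; apply: h. Qed.
Lemma ip_sym x y : ip y x = (ip x y)^*.
Proof. by case: hh => _ h _ _ _; apply: h. Qed.
Lemma ip_ge0 x : 0 <= ip x x.
Proof. by case: hh => _ _ h _ _; apply: h. Qed.
Lemma ip_def x : ip x x = 0 -> x = 0.
Proof. by case: hh => _ _ _ h _; apply: h. Qed.

Lemma ip0l z : ip 0 z = 0.
Proof.
have := ip_lin 1 0 0 z; rewrite scaler0 addr0 mul1r => h.
by apply: (@addrI _ (ip 0 z)); rewrite addr0 -h.
Qed.
Lemma ipDl x y z : ip (x + y) z = ip x z + ip y z.
Proof. by rewrite -[x]scale1r ip_lin mul1r scale1r. Qed.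
Lemma ipZl a x z : ip (a *: x) z = a * ip x z.
Proof. by rewrite -[a *: x]addr0 ip_lin ip0l addr0. Qed.

Definition ipr x y := complex.Re (ip x y).

Lemma iprDl x y z : ipr (x + y) z = ipr x z + ipr y z.
Proof. by rewrite /ipr ipDl; case: (ip x z) => a b; case: (ip y z). Qed.
Lemma iprZl (r : R) x z : ipr (r%:C%C *: x) z = r * ipr x z.
Proof. rewrite /ipr ipZl; case: (ip x z) => a b /=; by rewrite mul0r subr0. Qed.
Lemma iprC x y : ipr x y = ipr y x.
Proof. by rewrite /ipr (ip_sym x y); case: (ip x y). Qed.
Lemma ipr_ge0 x : 0 <= ipr x x.
Proof. have := ip_ge0 x; rewrite lecE /ipr => /andP[_]. by []. Qed.
Lemma ipr_def x : ipr x x = 0 -> x = 0.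
Proof.
move=> h; apply: ip_def; have := ip_ge0 x; rewrite lecE.
move: h; rewrite /ipr; case: (ip x x) => a b /= ha /andP[/eqP hb _].
by rewrite ha hb.
Qed.
Lemma iprNl x z : ipr (- x) z = - ipr x z.
Proof.
rewrite /ipr -scaleN1r ipZl; case: (ip x z) => a b /=.
by rewrite oppr0 mul0r subr0 mulN1r.
Qed.
Lemma iprDr x y z : ipr z (x + y) = ipr z x + ipr z y.
Proof. by rewrite !(iprC z) iprDl. Qed.
Lemma iprZr (r : R) x z : ipr z (r%:C%C *: x) = r * ipr z x.
Proof. by rewrite !(iprC z) iprZl. Qed.
Lemma iprNr x z : ipr z (- x) = - ipr z x.
Proof. by rewrite !(iprC z) iprNl. Qed.
Lemma ipr0l z : ipr 0 z = 0.
Proof. by rewrite /ipr ip0l. Qed.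
Lemma ipr0r z : ipr z 0 = 0.
Proof. by rewrite iprC ipr0l. Qed.

Lemma ipr_expand x y : ipr (x + y) (x + y) = ipr x x + 2 * ipr x y + ipr y y.
Proof. rewrite iprDl !iprDr (iprC y x); ring. Qed.

Lemma CS x y : ipr x y ^+ 2 <= ipr x x * ipr y y.
Proof.
have [c0|cn0] := eqVneq (ipr y y) 0.
  by rewrite (ipr_def c0) !ipr0r expr0n mulr0.
have c_gt0 : 0 < ipr y y by rewrite lt_def cn0 ipr_ge0.
set s := - ipr x y / ipr y y.
have hs : s * ipr y y = - ipr x y by rewrite /s mulfVK.
have := ipr_ge0 (x + s%:C%C *: y).
rewrite ipr_expand iprZr iprZl iprZr hs => h.
have h2 : 0 <= ipr y y * (ipr x x + s * ipr x y).
  by apply: mulr_ge0; [exact: ltW | lra].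
have e : ipr y y * (ipr x x + s * ipr x y) = ipr x x * ipr y y + (s * ipr y y) * ipr x y by ring.
rewrite e hs in h2; lra.
Qed.
Lemma hnorm_sq x : hnorm ip x ^+ 2 = ipr x x.
Proof. exact: sqr_sqrtr (ipr_ge0 x). Qed.
Lemma hnorm_ge0 x : 0 <= hnorm ip x.
Proof. exact: sqrtr_ge0. Qed.
Lemma hnorm_def x : hnorm ip x = 0 -> x = 0.
Proof.
move=> h; apply: ipr_def; have := hnorm_sq x; rewrite h expr0n /= => <- //.
Qed.
Lemma CS2 x y : ipr x y <= hnorm ip x * hnorm ip y.
Proof.
have := CS x y; rewrite -!hnorm_sq => h.
have h1 := hnorm_ge0 x; have h2 := hnorm_ge0 y.
have hp : 0 <= hnorm ip x * hnorm ip y by apply: mulr_ge0.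
rewrite -exprMn in h; nra.
Qed.
Lemma hnormD x y : hnorm ip (x + y) <= hnorm ip x + hnorm ip y.
Proof.
have h := CS2 x y; have := hnorm_sq (x + y); rewrite ipr_expand -!hnorm_sq => e.
have h1 := hnorm_ge0 x; have h2 := hnorm_ge0 y; have h3 := hnorm_ge0 (x + y).
nra.
Qed.
Lemma hnormZ (r : R) x : hnorm ip (r%:C%C *: x) = `|r| * hnorm ip x.
Proof.
rewrite /hnorm -/(ipr _ _) iprZl iprZr mulrA -expr2 sqrtrM ?sqr_ge0 //.
by rewrite sqrtr_sqr.
Qed.
Lemma hnormN x : hnorm ip (- x) = hnorm ip x.
Proof. by rewrite /hnorm -!/(ipr _ _) iprNl iprNr opprK. Qed.
Lemma hnormB x y : hnorm ip (x - y) = hnorm ip (y - x).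
Proof. by rewrite -hnormN opprB. Qed.
Lemma c3 : (3 : R[i]) = (3 : R)%:C%C.
Proof. by rewrite rmorph_nat. Qed.
Lemma hnorm3 x : hnorm ip ((3 : R[i]) *: x) = 3 * hnorm ip x.
Proof. by rewrite c3 hnormZ ger0_norm. Qed.
Section Lin.
Variable T : H -> H.
Hypothesis lin : forall (a : R[i]) x y, T (a *: x + y) = a *: T x + T y.
Lemma lin0 : T 0 = 0.
Proof.
have := lin 1 0 0; rewrite scaler0 addr0 scale1r => h.
by apply: (@addrI _ (T 0)); rewrite addr0 -h.
Qed.
Lemma linD x y : T (x + y) = T x + T y.
Proof. by rewrite -[x]scale1r lin !scale1r. Qed.
Lemma linZ a x : T (a *: x) = a *: T x.
Proof. by rewrite -[a *: x]addr0 lin lin0 addr0. Qed.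
Lemma linN x : T (- x) = - T x.
Proof. by rewrite -scaleN1r linZ scaleN1r. Qed.
Lemma linB x y : T (x - y) = T x - T y.
Proof. by rewrite linD linN. Qed.
End Lin.

Lemma proj_ipr (P : H -> H) : (forall (a : R[i]) x y, P (a *: x + y) = a *: P x + P y) ->
  (forall x, P (P x) = P x) -> is_adjoint ip P P ->
  forall v, ipr (P v) v = ipr (P v) (P v) /\ ipr (P v) (P v) <= ipr v v.
Proof.
move=> lin hPP hadj v.
have e1 : ipr (P v) (P v) = ipr (P v) v.
  by rewrite /ipr hadj hPP -/(ipr _ _) iprC.
split; first by [].
have := ipr_expand (P v) (v - P v); rewrite addrC subrK => ->.
rewrite iprDr iprNr e1 subrr mulr0 addr0.
have := ipr_ge0 (v - P v); lra.
Qed.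

Lemma proj_le (P : H -> H) : (forall (a : R[i]) x y, P (a *: x + y) = a *: P x + P y) ->
  (forall x, P (P x) = P x) -> is_adjoint ip P P ->
  forall v, hnorm ip (P v) <= hnorm ip v.
Proof.
move=> lin hPP hadj v; apply: ler_wsqrtr; have [_ h] := proj_ipr lin hPP hadj v.
exact: h.
Qed.

Lemma iso_norm (V Vs : H -> H) : is_adjoint ip V Vs -> (forall x, Vs (V x) = x) ->
  forall w, hnorm ip (V w) = hnorm ip w.
Proof. by move=> hadj hVV w; rewrite /hnorm hadj hVV. Qed.

Lemma coiso_norm (V Vs Q : H -> H) : is_adjoint ip V Vs -> (forall x, V (Vs x) = Q x) ->
  (forall (a : R[i]) x y, Q (a *: x + y) = a *: Q x + Q y) ->
  (forall x, Q (Q x) = Q x) -> is_adjoint ip Q Q ->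
  forall v, hnorm ip (Vs v) <= hnorm ip v.
Proof.
move=> hadj hVV lin hQQ hQ v; apply: ler_wsqrtr.
have e : complex.Re (ip (Vs v) (Vs v)) = ipr (Q v) v by rewrite -hadj hVV.
rewrite e; have [-> h] := proj_ipr lin hQQ hQ v; exact: h.
Qed.

Lemma zmod1 (V : zmodType) (a b c d e : V) : a - b - c = (a - d) - (b - e) - (c - d + e).
Proof.
rewrite !opprD !opprK !addrA.
rewrite [in RHS](addrAC _ (- c) d).
rewrite [in RHS](addrAC _ e d).
rewrite [in RHS](addrAC _ (- b) d).
rewrite subrK.
rewrite [in RHS](addrAC _ e (- c)).
rewrite addrK //.
Qed.

Lemma zmod2 (V : zmodType) (a b c d : V) : a - b - (c - d) = (a - c) - (b - d).
Proof. by rewrite !opprB addrACA [RHS]addrACA (addrC (- b)). Qed.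
Section Neumann.
Variables (f : H -> H) (K : R) (S : H -> Prop).
Hypotheses (fD : forall x y, f (x + y) = f x + f y) (fN : forall x, f (- x) = - f x)
  (K0 : 0 <= K) (fK : forall x, hnorm ip (f x) <= K * hnorm ip x)
  (Sf : forall x, S x -> S (f x))
  (fc : forall x, S x -> hnorm ip (f x) <= 2^-1 * hnorm ip x).
Variable y : H.
Hypothesis Sy : S y.

Let q : R := 2^-1.
Let hy := hnorm ip y.
Let pw k := iter k f y.
Let s n := \sum_(k < n) pw k.

Lemma q0 : 0 <= q. Proof. by rewrite /q invr_ge0 ler0n. Qed.
Lemma q1 : q <= 1. Proof. by rewrite /q invf_le1 ?ler1n // ltr0n. Qed.

Lemma pw_S k : S (pw k).
Proof. by elim: k => [|k IH] //=; apply: Sf. Qed.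

Lemma pw_le k : hnorm ip (pw k) <= q ^+ k * hy.
Proof.
elim: k => [|k IH]; first by rewrite expr0 mul1r.
rewrite /pw iterS -/(pw k) exprS -mulrA.
apply: le_trans (fc (pw_S k)) _; apply: ler_wpM2l => //; exact: q0.
Qed.

Lemma f0 : f 0 = 0.
Proof. have := fD 0 0; rewrite addr0 => h. by apply: (@addrI _ (f 0)); rewrite addr0 -h. Qed.

Lemma sS n : s n.+1 = s n + pw n.
Proof. by rewrite /s big_ord_recr. Qed.

Lemma s_fix n : s n - f (s n) = y - pw n.
Proof.
elim: n => [|n IH].
  by rewrite /s big_ord0 f0 subrr /pw /= subrr.
rewrite sS fD.
have -> : pw n.+1 = f (pw n) by [].
rewrite opprD addrACA IH; by rewrite addrA subrK.
Qed.

Lemma s_diff n m : hnorm ip (s (n + m)%N - s n) <= 2 * q ^+ n * hy - 2 * q ^+ (n + m) * hy.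
Proof.
elim: m => [|m IH].
  by rewrite addn0 subrr subrr /hnorm /ipr ip0l /= sqrtr0.
rewrite addnS sS addrAC.
apply: le_trans (hnormD _ _) _.
have := pw_le (n + m); rewrite exprS.
have -> : 2 * (q * q ^+ (n + m)) * hy = q ^+ (n + m) * hy.
  by rewrite mulrA /q divff ?mul1r // pnatr_eq0.
lra.
Qed.

Lemma hy0 : 0 <= hy. Proof. exact: hnorm_ge0. Qed.

Lemma small eps : 0 < eps -> exists N, forall n, (N <= n)%N -> 2 * q ^+ n * hy < eps.
Proof.
move=> he.
have hb : 0 <= 2 * hy / eps by apply: divr_ge0; [apply: mulr_ge0 => //; exact: hy0 | exact: ltW].
have := archi_boundP hb; set B := Num.Def.archi_bound _ => hB.
exists B => n hn.
have qn : q ^+ n <= q ^+ B by apply: ler_wiXn2l => //; [exact: q0 | exact: q1].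
have p2 : (B%:R : R) <= 2 ^+ B.
  by rewrite -natrX ler_nat ltnW // ltn_expl.
have P0 : 0 < (2 : R) ^+ B by apply: exprn_gt0; rewrite ltr0n.
have hB2 : 2 * hy < eps * B%:R by rewrite -ltr_pdivrMl // mulrC.
have e : 2 * q ^+ B * hy = 2 * hy / 2 ^+ B by rewrite /q exprVn mulrAC.
have h1 : 2 * q ^+ B * hy < eps.
  rewrite e ltr_pdivrMr //; apply: lt_le_trans hB2 _.
  by apply: ler_wpM2l => //; exact: ltW.
apply: le_lt_trans h1; apply: ler_wpM2r; first exact: hy0.
by apply: ler_wpM2l.
Qed.

Lemma neumann : exists z, z - f z = y.
Proof.
case: hh => _ _ _ _ hc.
have cauchy : forall e : R, 0 < e -> exists N, forall m n, (N <= m)%N -> (N <= n)%N ->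
    hnorm ip (s m - s n) < e.
  move=> e he; have [N hN] := small he; exists N => m n hm hn.
  wlog hnm : m n hm hn / (n <= m)%N.
    move=> W; case: (leqP n m) => h; first exact: W.
    rewrite hnormB; apply: W => //; exact: ltnW.
  rewrite -(subnKC hnm).
  apply: le_lt_trans (s_diff n (m - n)) _.
  have := hN n hn.
  have : 0 <= 2 * q ^+ (n + (m - n)) * hy.
    apply: mulr_ge0; last exact: hy0.
    by apply: mulr_ge0 => //; apply: exprn_ge0; exact: q0.
  lra.
have [l hl] := hc s cauchy.
exists l.
set D := l - f l - y.
have eD : forall n, D = (l - s n) - f (l - s n) - pw n.
  move=> n; have h := s_fix n.
  have hf : f (s n) = s n - (y - pw n) by rewrite -h opprB addrC subrK.
  have hp : pw n = y - s n + f (s n) by rewrite hf addrA subrK opprB addrC subrK.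
  by rewrite hp fD fN /D (zmod1 _ _ _ (s n) (f (s n))).
have bD : forall n, hnorm ip D <= (1 + K) * hnorm ip (s n - l) + q ^+ n * hy.
  move=> n; rewrite (eD n) (hnormB (s n) l).
  apply: le_trans (hnormD _ _) _; rewrite hnormN.
  have h1 := hnormD (l - s n) (- f (l - s n)); rewrite hnormN in h1.
  have := pw_le n; have := fK (l - s n); lra.
apply/eqP; rewrite -subr_eq0; apply/eqP; rewrite -/D.
apply: hnorm_def; apply/eqP; rewrite eq_le hnorm_ge0 andbT.
rewrite leNgt; apply/negP => dpos.
have e1 : 0 < hnorm ip D / (2 * (1 + K)).
  apply: divr_gt0; first exact: dpos.
  apply: mulr_gt0; first by rewrite ltr0n.
  by apply: (lt_le_trans ltr01); rewrite lerDl.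
have [N1 h1] := hl _ e1.
have [N2 h2] := small dpos.
set n := maxn N1 N2.
have a1 := h1 n (leq_maxl _ _); have a2 := h2 n (leq_maxr _ _); have a3 := bD n.
have K1 : 0 < 1 + K by apply: (lt_le_trans ltr01); rewrite lerDl.
have ee : (1 + K) * (hnorm ip D / (2 * (1 + K))) = hnorm ip D / 2.
  by field; apply: lt0r_neq0.
have a4 : (1 + K) * hnorm ip (s n - l) < hnorm ip D / 2.
  by rewrite -ee ltr_pM2l.
have a5 : q ^+ n * hy <= 2 * q ^+ n * hy.
  have : 0 <= q ^+ n * hy by apply: mulr_ge0; [apply: exprn_ge0; exact: q0 | exact: hy0].
  rewrite -mulrA; lra.
lra.
Qed.
End Neumann.
Lemma three_neq0 : (3 : R[i]) != 0.
Proof. by rewrite pnatr_eq0. Qed.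

Lemma bnd_pos (T : H -> H) : bounded_op ip T ->
  exists K : R, 0 <= K /\ forall x, hnorm ip (T x) <= K * hnorm ip x.
Proof.
case=> _ [M hM]; exists `|M|; split => // x.
apply: le_trans (hM x) _; apply: ler_wpM2r; first exact: hnorm_ge0.
exact: real_ler_norm (num_real M).
Qed.

Section Main.
Variable A : (H -> H) -> Prop.
Hypothesis hvN : von_neumann_algebra ip A.

Lemma hbA T : A T -> bounded_op ip T.
Proof. by case: hvN => h _ _; apply: h. Qed.
Lemma linA T : A T -> forall (a : R[i]) x y, T (a *: x + y) = a *: T x + T y.
Proof. by move=> /hbA []. Qed.

Lemma A3 V : A V -> A (fun x => (3 : R[i]) *: V x).
Proof.
move=> AV; case: hvN => hb _ heq; apply/heq; split.
  split.
    move=> a x y; rewrite (linA AV) scalerDr !scalerA mulrC //.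
  have [K [K0 hK]] := bnd_pos (hb _ AV); exists (3 * K) => x.
  rewrite hnorm3 -mulrA; apply: ler_wpM2l => //; exact: hK.
move=> S [[linS _] hS] x /=.
have := hS _ AV x => /= <-.
by rewrite (linZ linS).
Qed.

Variables V Vs Q : H -> H.
Hypotheses (AV : A V) (AVs : A Vs) (AQ : A Q) (hadj : is_adjoint ip V Vs)
  (hVsV : forall x, Vs (V x) = x) (hVVs : forall x, V (Vs x) = Q x)
  (projQ : is_projection ip Q) (neQ : ~ op_eq Q id).

Lemma V_surj_contra : (forall y, exists x, (3 : R[i]) *: V x = y) -> False.
Proof.
move=> hs; apply: neQ => y /=; have [x <-] := hs y.
by rewrite -hVVs (linZ (linA AVs)) hVsV (linZ (linA AV)).
Qed.

Lemma not_star : ~ star_clean ip A.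
Proof.
move=> hsc; have [U [P [AU AP [U' [AU' hUU' hU'U]] [hPP hPadj] hT]]] := hsc _ (A3 AV).
have linP := linA AP; have linVs := linA AVs; have linV := linA AV.
set W := fun w => (3 : R[i]) *: w - P (Vs w).
have hUW : forall x, U x = W (V x).
  move=> x; rewrite /W hVsV; have := hT x => /= ->; by rewrite addrK.
have hWs : forall y, W (V (U' y)) = y by move=> y; rewrite -hUW; apply: hUU'.
have Winj : forall d, W d = 0 -> d = 0.
  move=> d; rewrite /W => /eqP; rewrite subr_eq0 => /eqP h.
  have h1 : hnorm ip ((3 : R[i]) *: d) <= hnorm ip d.
    rewrite h; apply: le_trans (proj_le linP hPP hPadj _) _.
    case: projQ => hQQ hQadj.
    exact: coiso_norm hadj hVVs (linA AQ) hQQ hQadj d.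
  rewrite hnorm3 in h1; apply: hnorm_def.
  have := hnorm_ge0 d; lra.
have WB : forall a b, W a - W b = W (a - b).
  move=> a b; rewrite /W (linB linVs) (linB linP) scalerBr.
  by rewrite zmod2.
apply: V_surj_contra => y.
have h : V (U' (W y)) = y.
  by apply/eqP; rewrite -subr_eq0; apply/eqP; apply: Winj; rewrite -WB hWs subrr.
exists ((3 : R[i])^-1 *: U' (W y)).
by rewrite (linZ linV) scalerA mulfV ?three_neq0 // scale1r.
Qed.

Lemma not_strong : ~ strongly_clean A.
Proof.
move=> hsc; have [U [P [AU AP [U' [AU' hUU' hU'U]] [hPP hPT] hT]]] := hsc _ (A3 AV).
have linP := linA AP; have linV := linA AV; have linU' := linA AU'.
have hUU : forall x, U (U' x) = x by move=> x; apply: hUU'.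
have hU'U2 : forall x, U' (U x) = x by move=> x; apply: hU'U.
have hPP2 : forall x, P (P x) = P x by move=> x; apply: hPP.
have hPV : forall x, P (V x) = V (P x).
  move=> x; have := hPT x => /=; rewrite (linZ linP); exact: (scalerI three_neq0).
have hU : forall x, U x = (3 : R[i]) *: V x - P x.
  by move=> x; have := hT x => /= ->; rewrite addrK.
have hUP : forall w, U (P w) = P (U w).
  by move=> w; rewrite !hU (linB linP) (linZ linP) hPV !hPP2.
have hU'P : forall x, U' (P x) = P (U' x).
  by move=> x; rewrite -{1}(hUU x) -hUP hU'U2.
have [Kp [Kp0 hKp]] := bnd_pos (hbA AP).
have [Ku [Ku0 hKu]] := bnd_pos (hbA AU').
set f := fun w => - P (U' w).
have fD : forall x y, f (x + y) = f x + f y.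
  by move=> x y; rewrite /f (linD linU') (linD linP) opprD.
have fN : forall x, f (- x) = - f x.
  by move=> x; rewrite /f (linN linU') (linN linP).
have K0 : 0 <= Kp * Ku by apply: mulr_ge0.
have fK : forall x, hnorm ip (f x) <= (Kp * Ku) * hnorm ip x.
  move=> x; rewrite /f hnormN; apply: le_trans (hKp _) _.
  rewrite -mulrA; apply: ler_wpM2l => //; exact: hKu.
set S := fun w => P w = w.
have Sf : forall x, S x -> S (f x).
  by move=> x _; rewrite /S /f (linN linP) hPP2.
have fc : forall x, S x -> hnorm ip (f x) <= 2^-1 * hnorm ip x.
  move=> x; rewrite /S /f hnormN => Sx.
  set w := P (U' x).
  have hw : U w = x by rewrite /w hUP hUU.
  have e : (3 : R[i]) *: V w = x + w.
    have hPw : P w = w by rewrite /w hPP2.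
    have hw2 : (3 : R[i]) *: V w - w = x by rewrite -{2}hPw -hU hw.
    by rewrite -hw2 subrK.
  have := hnormD x w; rewrite -e hnorm3 (iso_norm hadj hVsV).
  have := hnorm_ge0 w; lra.
apply: V_surj_contra => y.
have [z hz] := neumann fD fN K0 fK Sf fc (hPP2 y : S (P y)).
set y1 := y - P y.
have Py1 : P y1 = 0 by rewrite /y1 (linB linP) hPP2 subrr.
exists (U' y1 + U' z).
rewrite (linD linV) scalerDr.
have -> : (3 : R[i]) *: V (U' y1) = y1.
  by rewrite -[LHS]/(id _) ; have := hT (U' y1) => /= ->; rewrite hUU -hU'P Py1 (lin0 linU') addr0.
have -> : (3 : R[i]) *: V (U' z) = P y.
  have := hT (U' z) => /= ->; rewrite hUU -hz /f opprK //.
by rewrite /y1 subrK.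
Qed.
End Main.
End Basic.

Unset Implicit Arguments.
Set Strict Implicit.


Theorem lemma2p1 (R : realType) (H : lmodType R[i]) (ip : H -> H -> R[i])
  (A : (H -> H) -> Prop) :
  is_hilbert ip -> von_neumann_algebra ip A -> properly_infinite ip A ->
  ~ star_clean ip A /\ ~ strongly_clean A.
Proof.
move=> hh hvN [[_ [_ [Q [AQ projQ [_ neQ] [V [Vs [AV AVs hadj hVsV hVVs]]]]]]] _].
split.
- exact: (not_star hh hvN AV AVs AQ hadj hVsV hVVs projQ neQ).
- exact: (not_strong hh hvN AV AVs hadj hVsV hVVs neQ).
Qed.
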